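(* Let $u,v:\mathbb{R}/2\pi\mathbb{Z}\times[0,1]\to\mathbb{R}^3$ and $w:\mathbb{R}/2\pi\mathbb{Z}\times[0,1]\to\mathbb{R}$ be smooth functions, $2\pi$-periodic in $t$, and let $a,\beta,\alpha:[0,1]\to\mathbb{R}$. Suppose that for all $(t,\Omega)$ \[ \begin{aligned} \partial_tv&=-\beta e_1+\Omega^2\bar Iu+2\Omega\bar Jv-w^3(u-Su)-Rw^3\,(u-S^2u),\\ \partial_tu&=v,\\ \partial_tw&=-\alpha-w^3\big\langle u-Su,\,L_a(v-Sv)\big\rangle, \end{aligned} \] and that for all $\Omega\in[0,1]$ \[ u_3(0,\Omega)=1,\qquad \frac1{2\pi}\int_0^{2\pi}u_1(t,\Omega)\,dt=0,\qquad \Big[w^2\big\langle u-Su,\,L_a(u-Su)\big\rangle\Big](0,\Omega)=1. \] Then $\alpha(\Omega)=0$ for all $\Omega\in[0,1]$.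
   Context: $e_1=(1,0,0)$, $\bar I=\mathrm{diag}(1,1,0)$, $\bar J=\begin{pmatrix}0&-1&0\\1&0&0\\0&0&0\end{pmatrix}$, $L_a=\mathrm{diag}(1,1,a)$ (with $a=a(\Omega)$). $[S^j\phi](t,\Omega)=\phi(t+4\pi j/3,\Omega)$ and $[R\phi](t,\Omega)=\phi(-t,\Omega)$; $Rw^3$ denotes the function $(t,\Omega)\mapsto w(-t,\Omega)^3$. Products of a scalar function with a vector function are componentwise, e.g. $w^3(u-Su)=(w^3(u_1-Su_1),w^3(u_2-Su_2),w^3(u_3-Su_3))$; $\langle\cdot,\cdot\rangle$ is the Euclidean inner product in $\mathbb{R}^3$. *)

(* Defs.v *)
From Stdlib Require Import Reals.
From Coquelicot Require Export Coquelicot.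
Open Scope R_scope.

(* Vector functions R/2piZ x [0,1] -> R^3 are represented by their three
   component functions R -> R -> R (first argument t, second argument Omega),
   2pi-periodic in t. *)

Definition Sh (j : nat) (phi : R -> R -> R) (t Om : R) : R :=
  phi (t + 4 * PI * INR j / 3) Om.

Definition Rf (phi : R -> R -> R) (t Om : R) : R := phi (- t) Om.

Definition periodic_t (phi : R -> R -> R) : Prop :=
  forall t Om, phi (t + 2 * PI) Om = phi t Om.

Definition smooth_t (phi : R -> R -> R) (Om : R) : Prop :=
  forall (n : nat) (t : R), ex_derive_n (fun s => phi s Om) n t.

(* <x, L_a y> with L_a = diag(1,1,a) *)
Definition ipL (a x1 x2 x3 y1 y2 y3 : R) : R :=
  x1 * y1 + x2 * y2 + a * (x3 * y3).

(* Main.v *)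
Require Import Defs.
From Stdlib Require Import Reals.
From Coquelicot Require Import Coquelicot.
Open Scope R_scope.
From Stdlib Require Import Lra.

Lemma sign_at (f : R -> R) c l : is_derive f c l -> l < 0 ->
  exists eta, 0 < eta /\ (forall h, 0 < h < eta -> f (c + h) < f c /\ f (c - h) > f c).
Proof.
  intros H Hl. apply is_derive_Reals in H.
  destruct (H (- l / 2)) as [d Hd]; [lra|].
  exists d; split; [apply cond_pos|]. intros h Hh.
  assert (A := Hd h ltac:(lra) ltac:(rewrite Rabs_pos_eq; lra)).
  assert (B := Hd (- h) ltac:(lra) ltac:(rewrite Rabs_Ropp, Rabs_pos_eq; lra)).
  apply Rabs_def2 in A. apply Rabs_def2 in B. destruct A as [A _], B as [B _].
  split.
  - assert ((f (c + h) - f c) / h < 0) by lra.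
    assert (f (c + h) - f c < 0); [|lra].
    replace (f (c + h) - f c) with ((f (c + h) - f c) / h * h) by (field; lra).
    nra.
  - assert ((f (c + - h) - f c) / - h < 0) by lra.
    replace (c - h) with (c + - h) by ring.
    assert (f (c + - h) - f c > 0); [|lra].
    replace (f (c + - h) - f c) with (- ((f (c + - h) - f c) / - h * h)) by (field; lra).
    nra.
Qed.

Lemma cont_eps (f : R -> R) c : continuity_pt f c -> forall eps, 0 < eps ->
  exists alp, 0 < alp /\ forall x, Rabs (x - c) < alp -> Rabs (f x - f c) < eps.
Proof.
  intros H eps He. destruct (H eps He) as [alp [Ha Hx]].
  exists alp; split; auto. intros x Hxc.
  destruct (Req_dec x c) as [->|Hne].
  - rewrite Rminus_eq_0, Rabs_R0; auto.
  - apply (Hx x). split; [split; [exact I| auto] | exact Hxc].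
Qed.

Lemma two_zeros (f df : R -> R) a b : a < b ->
  (forall t, is_derive f t (df t)) -> (forall t, f t = 0 -> df t < 0) ->
  f a = 0 -> f b = 0 -> False.
Proof.
  intros Hab Hd Hz Ha Hb.
  assert (Hc : forall t, continuity_pt f t).
  { intro t. apply derivable_continuous_pt. exists (df t). apply is_derive_Reals, Hd. }
  destruct (sign_at f a (df a) (Hd a) (Hz a Ha)) as [e1 [He1 H1]].
  destruct (sign_at f b (df b) (Hd b) (Hz b Hb)) as [e2 [He2 H2]].
  set (E := fun t => a <= t <= b /\ forall s, a < s <= t -> f s < 0).
  assert (Eb : bound E). { exists b. intros t [Ht _]. lra. }
  assert (Ea : E a). { split; [lra|]. intros s Hs; lra. }
  destruct (completeness E Eb (ex_intro _ a Ea)) as [c [Cub Club]].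
  set (t0 := a + Rmin e1 (b - a) / 2).
  assert (Et0 : E t0).
  { unfold t0; split.
    - split; [|]; pose proof (Rmin_l e1 (b-a)); pose proof (Rmin_r e1 (b-a));
      pose proof (Rmin_glb_lt e1 (b-a) 0 ltac:(lra) ltac:(lra)) as HH; lra.
    - intros s Hs. pose proof (Rmin_l e1 (b-a)).
      replace s with (a + (s - a)) by ring. rewrite <- Ha. apply H1. lra. }
  assert (Hcb : c <= b) by (apply Club; intros t [Ht _]; lra).
  assert (Hca : t0 <= c) by (apply Cub; auto).
  assert (Ht0a : a < t0).
  { unfold t0. pose proof (Rmin_glb_lt e1 (b-a) 0 ltac:(lra) ltac:(lra)). lra. }
  assert (HI : forall s, a < s < c -> f s < 0).
  { intros s Hs. destruct (Rlt_le_dec (f s) 0) as [|Hf]; auto. exfalso.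
    assert (c <= s); [|lra]. apply Club. intros t [Ht Ht2].
    destruct (Rle_lt_dec t s); auto. assert (f s < 0) by (apply Ht2; lra). lra. }
  destruct (Rtotal_order (f c) 0) as [Hneg|[Hzero|Hpos]].
  - destruct (Req_dec c b) as [->|Hne]; [lra|].
    destruct (cont_eps f c (Hc c) (- f c) ltac:(lra)) as [alp [Halp Hx]].
    set (t := c + Rmin alp (b - c) / 2).
    pose proof (Rmin_l alp (b-c)); pose proof (Rmin_r alp (b-c)).
    pose proof (Rmin_glb_lt alp (b-c) 0 ltac:(lra) ltac:(lra)).
    assert (E t).
    { unfold t; split; [lra|]. intros s Hs.
      destruct (Rlt_le_dec s c). { apply HI; lra. }
      assert (HH : Rabs (f s - f c) < - f c) by (apply Hx; rewrite Rabs_pos_eq; lra).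
      apply Rabs_def2 in HH. lra. }
    assert (t <= c) by (apply Cub; auto). unfold t in *. lra.
  - destruct (sign_at f c (df c) (Hd c) (Hz c Hzero)) as [e [He H]].
    pose proof (Rmin_l e (c-a)); pose proof (Rmin_r e (c-a)).
    pose proof (Rmin_glb_lt e (c-a) 0 ltac:(lra) ltac:(lra)).
    destruct (H (Rmin e (c - a) / 2)) as [_ HH]; [lra|].
    assert (f (c - Rmin e (c - a) / 2) < 0) by (apply HI; lra). lra.
  - destruct (cont_eps f c (Hc c) (f c) ltac:(lra)) as [alp [Halp Hx]].
    pose proof (Rmin_l alp (c-a)); pose proof (Rmin_r alp (c-a)).
    pose proof (Rmin_glb_lt alp (c-a) 0 ltac:(lra) ltac:(lra)).
    set (s := c - Rmin alp (c - a) / 2).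
    assert (HH : Rabs (f s - f c) < f c) by (apply Hx; unfold s; rewrite Rabs_left; lra).
    apply Rabs_def2 in HH. assert (f s < 0) by (apply HI; unfold s; lra). lra.
Qed.
Lemma core (W U1 U2 U3 V1 V2 V3 : R -> R) (A al c : R)
  (PW : forall t, W (t + 2 * PI) = W t)
  (P1 : forall t, U1 (t + 2 * PI) = U1 t)
  (P2 : forall t, U2 (t + 2 * PI) = U2 t)
  (P3 : forall t, U3 (t + 2 * PI) = U3 t)
  (HU1 : forall t, is_derive U1 t (V1 t))
  (HU2 : forall t, is_derive U2 t (V2 t))
  (HU3 : forall t, is_derive U3 t (V3 t))
  (HW : forall t, is_derive W t (- al - W t ^ 3 *
          ipL A (U1 t - U1 (t + c)) (U2 t - U2 (t + c)) (U3 t - U3 (t + c))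
                (V1 t - V1 (t + c)) (V2 t - V2 (t + c)) (V3 t - V3 (t + c))))
  (H0 : W 0 <> 0) : al = 0.
Proof.
  destruct (Req_dec al 0) as [|Hal]; auto. exfalso.
  set (dW := fun t => - al - W t ^ 3 *
          ipL A (U1 t - U1 (t + c)) (U2 t - U2 (t + c)) (U3 t - U3 (t + c))
                (V1 t - V1 (t + c)) (V2 t - V2 (t + c)) (V3 t - V3 (t + c))).
  assert (PI0 := PI_RGT_0).
  assert (Hnz : forall t, W t <> 0).
  { intros t Ht. destruct (Rlt_or_le 0 al) as [Hp|Hn].
    - apply (two_zeros W dW t (t + 2 * PI)); try lra.
      + intro s. apply HW.
      + intros s Hs. unfold dW. rewrite Hs. simpl. lra.
      + auto.
      + rewrite PW; auto.
    - apply (two_zeros (fun s => - W s) (fun s => - dW s) t (t + 2 * PI)); try lra.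
      + intro s. apply (is_derive_opp W s (dW s)), HW.
      + intros s Hs. unfold dW. replace (W s) with 0 by lra. simpl. lra.
      + rewrite PW, Ht; lra. }
  set (K := fun s => / (W s * W s) - ((U1 s - U1 (s + c)) * (U1 s - U1 (s + c))
     + (U2 s - U2 (s + c)) * (U2 s - U2 (s + c)) + A * ((U3 s - U3 (s + c)) * (U3 s - U3 (s + c))))).
  assert (EW : forall s, Derive (fun x => W x) s = dW s) by (intro; apply is_derive_unique, HW).
  assert (E1 : forall s, Derive (fun x => U1 x) s = V1 s) by (intro; apply is_derive_unique, HU1).
  assert (E2 : forall s, Derive (fun x => U2 x) s = V2 s) by (intro; apply is_derive_unique, HU2).
  assert (E3 : forall s, Derive (fun x => U3 x) s = V3 s) by (intro; apply is_derive_unique, HU3).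
  assert (XW : forall s, ex_derive (fun x => W x) s) by (intro s; exists (dW s); apply HW).
  assert (X1 : forall s, ex_derive (fun x => U1 x) s) by (intro s; exists (V1 s); apply HU1).
  assert (X2 : forall s, ex_derive (fun x => U2 x) s) by (intro s; exists (V2 s); apply HU2).
  assert (X3 : forall s, ex_derive (fun x => U3 x) s) by (intro s; exists (V3 s); apply HU3).
  assert (DK : forall t, is_derive K t (2 * al / W t ^ 3)).
  { intro t. specialize (Hnz t). unfold K. auto_derive. 
    - repeat match goal with |- _ /\ _ => split end; try exact I;
      try (first [apply XW | apply X1 | apply X2 | apply X3]).
      intro HH. apply Hnz. apply Rmult_integral in HH; tauto.
    - rewrite !EW, !E1, !E2, !E3. unfold dW, ipL.
      generalize (U1 t) (U1 (t + c)) (U2 t) (U2 (t + c)) (U3 t) (U3 (t + c))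
        (V1 t) (V1 (t + c)) (V2 t) (V2 (t + c)) (V3 t) (V3 (t + c)).
      revert Hnz. generalize (W t). intros. field. auto. }
  
  destruct (MVT_gen K 0 (2 * PI) (fun t => 2 * al / W t ^ 3)) as [x [_ Hx]].
  - intros; apply DK.
  - intros. apply continuity_pt_filterlim. apply (ex_derive_continuous (K:=R_AbsRing) (V:=R_NormedModule) K). eexists; apply DK.
  - assert (K (2 * PI) = K 0).
    { unfold K. rewrite !(Rplus_comm (2 * PI) c), !P1, !P2, !P3.
      replace (2 * PI) with (0 + 2 * PI) by ring. rewrite PW, P1, P2, P3, !Rplus_0_l. reflexivity. }
    assert (HH : 2 * al / W x ^ 3 * (2 * PI - 0) = 0) by lra.
    assert (W x ^ 3 <> 0) by (apply pow_nonzero, Hnz).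
    apply Rmult_integral in HH. destruct HH as [HH|HH]; [|lra].
    unfold Rdiv in HH. apply Rmult_integral in HH. destruct HH as [HH|HH]; [lra|].
    exact (Rinv_neq_0_compat _ H1 HH).
Qed.
Theorem lemma2p4
  (u1 u2 u3 v1 v2 v3 w : R -> R -> R) (a beta alpha : R -> R)
  (Hper : periodic_t u1 /\ periodic_t u2 /\ periodic_t u3 /\
          periodic_t v1 /\ periodic_t v2 /\ periodic_t v3 /\ periodic_t w)
  (Hsmooth : forall Om, 0 <= Om <= 1 ->
     smooth_t u1 Om /\ smooth_t u2 Om /\ smooth_t u3 Om /\
     smooth_t v1 Om /\ smooth_t v2 Om /\ smooth_t v3 Om /\ smooth_t w Om)
  (Hv1 : forall t Om, 0 <= Om <= 1 ->
     is_derive (fun s => v1 s Om) t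
       (- beta Om + Om ^ 2 * u1 t Om + 2 * Om * (- v2 t Om)
        - w t Om ^ 3 * (u1 t Om - Sh 1 u1 t Om)
        - Rf w t Om ^ 3 * (u1 t Om - Sh 2 u1 t Om)))
  (Hv2 : forall t Om, 0 <= Om <= 1 ->
     is_derive (fun s => v2 s Om) t
       (Om ^ 2 * u2 t Om + 2 * Om * v1 t Om
        - w t Om ^ 3 * (u2 t Om - Sh 1 u2 t Om)
        - Rf w t Om ^ 3 * (u2 t Om - Sh 2 u2 t Om)))
  (Hv3 : forall t Om, 0 <= Om <= 1 ->
     is_derive (fun s => v3 s Om) t
       (- w t Om ^ 3 * (u3 t Om - Sh 1 u3 t Om)
        - Rf w t Om ^ 3 * (u3 t Om - Sh 2 u3 t Om)))
  (Hu1 : forall t Om, 0 <= Om <= 1 -> is_derive (fun s => u1 s Om) t (v1 t Om))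
  (Hu2 : forall t Om, 0 <= Om <= 1 -> is_derive (fun s => u2 s Om) t (v2 t Om))
  (Hu3 : forall t Om, 0 <= Om <= 1 -> is_derive (fun s => u3 s Om) t (v3 t Om))
  (Hw : forall t Om, 0 <= Om <= 1 ->
     is_derive (fun s => w s Om) t
       (- alpha Om - w t Om ^ 3 *
          ipL (a Om)
            (u1 t Om - Sh 1 u1 t Om) (u2 t Om - Sh 1 u2 t Om) (u3 t Om - Sh 1 u3 t Om)
            (v1 t Om - Sh 1 v1 t Om) (v2 t Om - Sh 1 v2 t Om) (v3 t Om - Sh 1 v3 t Om)))
  (Hc1 : forall Om, 0 <= Om <= 1 -> u3 0 Om = 1)
  (Hc2 : forall Om, 0 <= Om <= 1 ->
     / (2 * PI) * RInt (fun t => u1 t Om) 0 (2 * PI) = 0)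
  (Hc3 : forall Om, 0 <= Om <= 1 ->
     w 0 Om ^ 2 *
       ipL (a Om)
         (u1 0 Om - Sh 1 u1 0 Om) (u2 0 Om - Sh 1 u2 0 Om) (u3 0 Om - Sh 1 u3 0 Om)
         (u1 0 Om - Sh 1 u1 0 Om) (u2 0 Om - Sh 1 u2 0 Om) (u3 0 Om - Sh 1 u3 0 Om)
     = 1) :
  forall Om, 0 <= Om <= 1 -> alpha Om = 0.
Proof.
  intros Om HOm.
  destruct Hper as [P1 [P2 [P3 [_ [_ [_ PW]]]]]].
  apply (core (fun s => w s Om) (fun s => u1 s Om) (fun s => u2 s Om) (fun s => u3 s Om)
    (fun s => v1 s Om) (fun s => v2 s Om) (fun s => v3 s Om) (a Om) (alpha Om) (4 * PI * INR 1 / 3)).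
  - intro t; apply PW.
  - intro t; apply P1.
  - intro t; apply P2.
  - intro t; apply P3.
  - intro t; apply Hu1; auto.
  - intro t; apply Hu2; auto.
  - intro t; apply Hu3; auto.
  - intro t; apply Hw; auto.
  - intro H0. assert (HH := Hc3 Om HOm). simpl in HH. rewrite H0 in HH. lra.
Qed.
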